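(* If $K\subseteq L\subseteq M$ are finite extensions inside $\bar K$, then $t_K(L)\mid t_K(M)$.
   Context: $K$ is a perfect field with a fixed algebraic closure $\bar K$. For a finite extension $P/K$, the ascending index $t_K(P)=[F:K]$, where $F$ is the unique subfield of $P$ that is Galois over $K$ of maximum possible degree. *)

(* Defs.v *)
From HB Require Import structures.
From mathcomp Require Import all_boot all_order all_algebra all_field.
Set Implicit Arguments. Unset Strict Implicit. Unset Printing Implicit Defensive.
Import GRing.Theory.
Local Open Scope ring_scope.

Definition perfect_field (F : fieldType) : Prop :=
  forall p : nat, p \in [pchar F] -> forall x : F, exists y : F, y ^+ p = x.

(* Inside a finite normal extension L0 of the base field K (standing in for
   the relevant finite part of the algebraic closure), E is "the" subfield of P
   that is Galois over K of maximum possible degree. *)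
Definition max_galois_sub (K : fieldType) (L0 : splittingFieldType K)
    (P E : {subfield L0}) : Prop :=
  [/\ (E <= P)%VS, galois 1%VS E &
      forall E' : {subfield L0}, (E' <= P)%VS -> galois 1%VS E' ->
        (\dim E' <= \dim E)%N].

(* t_K(P) = [E : K] for such E; note \dim E is the K-dimension, [E:K]. *)

(* Main.v *)
Require Import Defs.
From HB Require Import structures.
From mathcomp Require Import all_boot all_order all_algebra all_field.
Import GRing.Theory.
Local Open Scope ring_scope.

Theorem proposition9p1 (K : fieldType) (HK : perfect_field K)
    (L0 : splittingFieldType K) (L M FL FM : {subfield L0}) :
  (L <= M)%VS ->
  max_galois_sub L FL -> max_galois_sub M FM ->
  (\dim FL %| \dim FM)%N.
Proof.
move=> sLM [sFLL gFL _] [sFMM gFM maxM].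
apply: field_dimS.
have [p [Kp sepp [rsL Dp defFL]]] := splitting_galoisField gFL.
have [q [Kq sepq [rsM Dq defFM]]] := splitting_galoisField gFM.
have rsLFL : {subset rsL <= FL} by rewrite -defFL; apply: seqv_sub_adjoin.
have rsMFM : {subset rsM <= FM} by rewrite -defFM; apply: seqv_sub_adjoin.
pose E := <<FM & rsL>>%AS.
have sFME : (FM <= E)%VS by apply: subv_adjoin_seq.
have rsLE : {subset rsL <= E} by apply: seqv_sub_adjoin.
have sEM : (E <= M)%VS.
  apply/Fadjoin_seqP; split => // x /rsLFL xFL.
  by apply: (subvP sLM); apply: (subvP sFLL).
have s1FM : (1 <= FM)%VS by case/and3P: gFM.
have gE : galois 1%VS E.
  apply/and3P; split.
  - exact: subv_trans s1FM sFME.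
  - apply: (separable_trans (M := FM)); first by case/and3P: gFM.
    apply: separable_Fadjoin_seq; apply/allP => x xr.
    apply/separable_elementP; exists p; split => //.
    + by apply: polyOverS Kp => y; apply: (subvP s1FM).
    + by rewrite (eqp_root Dp) root_prod_XsubC.
  - apply/splitting_normalField; first exact: subv_trans s1FM sFME.
    exists (p * q); first by rewrite rpredM.
    exists (rsL ++ rsM); first by rewrite big_cat /=; apply: eqp_trans (eqp_mulr _ Dp) (eqp_mull _ Dq).
    apply/eqP; rewrite eqEsubv; apply/andP; split.
      apply/Fadjoin_seqP; split; first exact: subv_trans s1FM sFME.
      move=> x; rewrite mem_cat => /orP[/rsLE // | /rsMFM]; exact: (subvP sFME).
    apply/Fadjoin_seqP; split.
      rewrite -defFM; apply/Fadjoin_seqP; split; first exact: subv_adjoin_seq.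
      by move=> x xr; apply: seqv_sub_adjoin; rewrite mem_cat xr orbT.
    by move=> x xr; apply: seqv_sub_adjoin; rewrite mem_cat xr.
have EFM : E = FM.
  apply/eqP; rewrite eq_sym; apply/eqP/val_inj/eqP => /=.
  by rewrite eqEdim sFME (maxM E sEM gE).
rewrite -defFL; apply/Fadjoin_seqP; split => //.
by move=> x /rsLE; rewrite EFM.
Qed.
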